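(* Consider the following linear closed-loop model of a lossless modular multilevel converter (MMC) interconnecting an AC network and a DC network. The MMC's total internal energy $W_t$ satisfies $$\tfrac{d}{dt} W_t = P_{\mathrm{dc}} - P_{\mathrm{ac}},$$ where $P_{\mathrm{dc}}$ is the power flowing from the DC network into the MMC and $P_{\mathrm{ac}}$ is the power flowing out of the MMC into the AC network. Write $\Delta W_t = W_t - W_t^\star$ for a constant energy setpoint $W_t^\star$. The MMC AC voltage angle $\theta$ satisfies $\tfrac{d}{dt}\theta = \omega$, and the MMC AC frequency $\omega$ and DC terminal voltage $V^{\mathrm{dc}}_t$ are determined by one of the following two controls (with constant setpoints $\omega^\star$, $V^{\mathrm{dc}\star}_t$, and power setpoints $P^\star_{\mathrm{ac}}=P^\star_{\mathrm{dc}}=0$): (i) hybrid power/energy droop control (unfiltered): $$\omega = \omega^\star + k_p^{\mathrm{ac}}(P^\star_{\mathrm{ac}} - P_{\mathrm{ac}}) + k_w^{\mathrm{ac}}\Delta W_t,\qquad V^{\mathrm{dc}}_t = V^{\mathrm{dc}\star}_t + k_p^{\mathrm{dc}}(P_{\mathrm{dc}} - P^\star_{\mathrm{dc}}) + k_w^{\mathrm{dc}}\Delta W_t,$$ with $k_w^{\mathrm{ac}} > k_p^{\mathrm{ac}}$; (ii) energy-balancing control with ideal proportional-derivative action: $$\omega = \omega^\star + k_p^{\mathrm{ac}}\tfrac{d}{dt}\Delta W_t + k_w^{\mathrm{ac}}\Delta W_t,\qquad V^{\mathrm{dc}}_t = V^{\mathrm{dc}\star}_t + k_p^{\mathrm{dc}}\tfrac{d}{dt}\Delta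 W_t + k_w^{\mathrm{dc}}\Delta W_t.$$ In both cases $k_p^{\mathrm{ac}}, k_p^{\mathrm{dc}}, k_w^{\mathrm{ac}}, k_w^{\mathrm{dc}} > 0$. The linearized AC network (when connected) is $P_{\mathrm{ac}} = b_{\mathrm{ac}}(\theta - \theta_{\mathrm{ac}})$, $\tfrac{d}{dt}\theta_{\mathrm{ac}} = \omega^\star + k_{\mathrm{ac}} P_{\mathrm{ac}}$, with susceptance $b_{\mathrm{ac}}>0$ and AC source droop coefficient $k_{\mathrm{ac}}\ge 0$; when the AC network is disconnected, $P_{\mathrm{ac}}\equiv 0$. The linearized DC network (when connected) is $P_{\mathrm{dc}} = g_{\mathrm{dc}}(V_{\mathrm{dc}} - V^{\mathrm{dc}}_t)$, $V_{\mathrm{dc}} = V^{\mathrm{dc}\star}_t - k_{\mathrm{dc}}P_{\mathrm{dc}}$, with conductance $g_{\mathrm{dc}}>0$ and DC source droop coefficient $k_{\mathrm{dc}}\ge 0$; when the DC network is disconnected, $P_{\mathrm{dc}}\equiv 0$. Then, for either control (i) or (ii), and whether the MMC is connected (a) only to the AC network, (b) only to the DC network, or (c) to both networks, the resulting linear closed-loop system (in the state $\Delta W_t$ together with, when the AC network is connected, the angle difference $\theta-\theta_{\mathrm{ac}}$) has an asymptotically stable equilibrium at the origin; in particular $W_t \to W_t^\star$, $\omega\to\omega^\star$ and $V^{\mathrm{dc}}_t \to V^{\mathrm{dc}\star}_t$ for every initial condition.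
   Context: This is a macroscopic (averaged) MMC model in which fast internal converter dynamics (current control, arm energy balancing, voltage control) are neglected, the MMC is lossless, and the network equations are linearized around the zero-power-flow operating point. The AC source is a voltage source with frequency droop and the DC source is a voltage source with power–voltage droop, each behind an equivalent line (susceptance $b_{\mathrm{ac}}$, resp. conductance $g_{\mathrm{dc}}$). ''Asymptotically stable'' refers to the equilibrium of the linear time-invariant closed-loop ODE. *)

(* Defs.v *)
From HB Require Import structures.
From mathcomp Require Import all_boot all_order all_algebra.
From mathcomp Require Import all_classical all_reals all_analysis.
Set Implicit Arguments. Unset Strict Implicit. Unset Printing Implicit Defensive.
Import Order.TTheory GRing.Theory Num.Theory.
Import numFieldNormedType.Exports.
Local Open Scope classical_set_scope.
Local Open Scope ring_scope.

Inductive control := HybridDroop | EnergyPD .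

Inductive connection := ACOnly | DCOnly | ACDC .

Definition ac_connected (c : connection) : bool :=
  match c with DCOnly => false | _ => true end.
Definition dc_connected (c : connection) : bool :=
  match c with ACOnly => false | _ => true end.

Record params (R : realType) := Params {
  kp_ac : R; kp_dc : R; kw_ac : R; kw_dc : R;
  b_ac : R; g_dc : R; k_ac : R; k_dc : R;
  omega_s : R;
  Vt_s : R;
  Wt_s : R
}.

Record signals (R : realType) := Signals {
  Wt : R -> R; theta : R -> R; omega : R -> R; Vt : R -> R;
  Pac : R -> R; Pdc : R -> R; theta_ac : R -> R; Vdc : R -> R
}.

(* The closed-loop model, with power setpoints P_ac^* = P_dc^* = 0. *)
Definition closed_loop (R : realType) (ctrl : control) (conn : connection)
    (p : params R) (s : signals R) : Prop :=
  forall t : R, 0 <= t ->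
  [/\ derivable (Wt s) t 1 /\ derive1 (Wt s) t = Pdc s t - Pac s t,
      derivable (theta s) t 1 /\ derive1 (theta s) t = omega s t,
      match ctrl with
      | HybridDroop =>
          omega s t = omega_s p + kp_ac p * (0 - Pac s t)
                      + kw_ac p * (Wt s t - Wt_s p) /\
          Vt s t = Vt_s p + kp_dc p * (Pdc s t - 0)
                      + kw_dc p * (Wt s t - Wt_s p)
      | EnergyPD =>
          omega s t = omega_s p + kp_ac p * derive1 (Wt s) t
                      + kw_ac p * (Wt s t - Wt_s p) /\
          Vt s t = Vt_s p + kp_dc p * derive1 (Wt s) t
                      + kw_dc p * (Wt s t - Wt_s p)
      end,
      (if ac_connected conn then
         [/\ Pac s t = b_ac p * (theta s t - theta_ac s t),
             derivable (theta_ac s) t 1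
           & derive1 (theta_ac s) t = omega_s p + k_ac p * Pac s t]
       else Pac s t = 0)
    & (if dc_connected conn then
         Pdc s t = g_dc p * (Vdc s t - Vt s t) /\
         Vdc s t = Vt_s p - k_dc p * Pdc s t
       else Pdc s t = 0)].

Definition state_norm (R : realType) (conn : connection) (p : params R)
    (s : signals R) (t : R) : R :=
  if ac_connected conn then
    Num.max `|Wt s t - Wt_s p| `|theta s t - theta_ac s t|
  else `|Wt s t - Wt_s p|.

Definition asymptotically_stable (R : realType) (S : Type)
    (Sol : S -> Prop) (nx : S -> R -> R) : Prop :=
  (forall eps : R, 0 < eps -> exists2 del : R, 0 < del &
     forall s, Sol s -> nx s 0 < del -> forall t, 0 <= t -> nx s t < eps)
  /\ (forall s, Sol s -> nx s t @[t --> +oo] --> (0 : R)).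

(* Main.v *)
Require Import Defs.
From HB Require Import structures.
From mathcomp Require Import all_boot all_order all_algebra.
From mathcomp Require Import all_classical all_reals all_analysis.
From mathcomp Require Import ring lra.
Import Order.TTheory GRing.Theory Num.Theory.
Import numFieldNormedType.Exports.
Local Open Scope classical_set_scope.
Local Open Scope ring_scope.


Section Core.
Variable R : realType.

Lemma der_of (f : R -> R) (t df : R) : is_derive t 1 f df -> derivable f t 1 /\ derive1 f t = df.
Proof. by move=> H; split; [exact: ex_derive | rewrite derive1E derive_val]. Qed.

Lemma isd (f : R -> R) (t : R) : derivable f t 1 -> is_derive t 1 f (derive1 f t).
Proof. by move=> H; rewrite derive1E; exact: derivableP. Qed.

Lemma scR (k y : R) : k *: y = k * y. Proof. by []. Qed.

Lemma core (a b c e : R) : a + e < 0 -> 0 < a * e - b * c ->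
  exists K : R, 0 < K /\ forall x d : R -> R,
  (forall t, 0 <= t -> derivable x t 1 /\ derive1 x t = a * x t + b * d t) ->
  (forall t, 0 <= t -> derivable d t 1 /\ derive1 d t = c * x t + e * d t) ->
  (forall t, 0 <= t -> x t ^+ 2 + d t ^+ 2 <= K * (x 0 ^+ 2 + d 0 ^+ 2)) /\
  (forall eps, 0 < eps -> exists M, forall t, M < t -> 0 <= t /\ x t ^+ 2 + d t ^+ 2 < eps).
Proof.
move=> HT HD.
have [D eD] : exists D, D = a * e - b * c by eexists.
rewrite -eD in HD.
have [L eL] : exists L, L = a * a + b * b + c * c + e * e by eexists.
have L0 : 0 <= L by rewrite eL; nra.
have DL0 : 0 < D + L by lra.
have [q eq] : exists q, q = - (2 * (a + e) * D) by eexists.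
have q0 : 0 < q.
  have h : (a + e) * D < 0 by rewrite pmulr_llt0.
  rewrite eq; lra.
have [k ek] : exists k, k = q / (D + L) by eexists.
have k0 : 0 < k by rewrite ek divr_gt0.
have kDL : k * (D + L) = q by rewrite ek mulfVK ?gt_eqF.
exists ((D + L) / D); split; first by rewrite divr_gt0.
move=> x d Hx Hd.
pose V t := D * (x t * x t + d t * d t) + (e * x t - b * d t) * (e * x t - b * d t)
   + (a * d t - c * x t) * (a * d t - c * x t).
have Vge t : D * (x t ^+ 2 + d t ^+ 2) <= V t.
  rewrite /V.
  have h1 : 0 <= (e * x t - b * d t) * (e * x t - b * d t) by rewrite -expr2 sqr_ge0.
  have h2 : 0 <= (a * d t - c * x t) * (a * d t - c * x t) by rewrite -expr2 sqr_ge0.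
  rewrite !expr2; lra.
have Vle t : V t <= (D + L) * (x t ^+ 2 + d t ^+ 2).
  rewrite /V eL.
  have h1 : 0 <= (e * d t + b * x t) ^+ 2 by exact: sqr_ge0.
  have h2 : 0 <= (a * x t + c * d t) ^+ 2 by exact: sqr_ge0.
  nra.
set G : R -> R := ((D + e * e + c * c) \*: (x * x) + (- 2 * e * b - 2 * a * c) \*: (x * d)
   + (D + b * b + a * a) \*: (d * d)) * (cst 1 + k \*: id).
have GE t : G t = V t * (1 + k * t).
  by rewrite /G /V /= !fctE /GRing.scale /= -[k *: t]/(k * t) ?scR eD; ring.
have dG t : 0 <= t -> derivable G t 1 /\ derive1 G t <= 0.
  move=> t0.
  have [dx ex] := Hx t t0; have [dd ed] := Hd t t0.
  have Ix := isd x t dx; have Id := isd d t dd.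
  rewrite ex in Ix; rewrite ed in Id.
  have HG : is_derive t 1 G (
     (- q * (x t ^+ 2 + d t ^+ 2)) * (1 + k * t) + k * V t).
    apply: is_derive_eq.
    rewrite /= !fctE /GRing.scale /= -[k *: t]/(k * t) /V eq eD.
    rewrite ?scR; ring.
  have [HG1 ->] := der_of _ _ _ HG; split => //.
  have S0 : 0 <= x t ^+ 2 + d t ^+ 2 by rewrite addr_ge0 ?sqr_ge0.
  have h1 : k * V t <= q * (x t ^+ 2 + d t ^+ 2).
    by rewrite -kDL -mulrA ler_pM2l // Vle.
  have h2 : 0 <= q * (x t ^+ 2 + d t ^+ 2) * (k * t).
    by rewrite !mulr_ge0 // ltW.
  have -> : - q * (x t ^+ 2 + d t ^+ 2) * (1 + k * t) + k * V t =
    (k * V t - q * (x t ^+ 2 + d t ^+ 2)) - q * (x t ^+ 2 + d t ^+ 2) * (k * t) by ring.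
  lra.
clearbody G.
have Gle t : 0 <= t -> G t <= G 0.
  move=> t0.
  apply: (@ler0_derive1_nincry _ G 0) => //.
  - by move=> y; rewrite in_itv /= andbT => /ltW /dG [].
  - by move=> y; rewrite in_itv /= andbT => /ltW /dG [].
  - apply: derivable_within_continuous => y.
    by rewrite in_itv /= andbT => /dG [].
have key t : 0 <= t -> D * (x t ^+ 2 + d t ^+ 2) * (1 + k * t) <= V 0.
  move=> t0; have := Gle t t0; rewrite !GE mulr0 addr0 mulr1 => h.
  have kt : 0 <= 1 + k * t by have := mulr_ge0 (ltW k0) t0; lra.
  by apply: le_trans h; rewrite ler_wpM2r // Vge.
have SG t : 0 <= x t ^+ 2 + d t ^+ 2 by rewrite addr_ge0 ?sqr_ge0.
split.
  move=> t t0.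
  have h := key t t0; have h0 := Vle 0.
  have m1 : D * (x t ^+ 2 + d t ^+ 2) <= D * (x t ^+ 2 + d t ^+ 2) * (1 + k * t).
    rewrite -subr_ge0.
    have -> : D * (x t ^+ 2 + d t ^+ 2) * (1 + k * t) - D * (x t ^+ 2 + d t ^+ 2)
      = D * (x t ^+ 2 + d t ^+ 2) * (k * t) by ring.
    by rewrite !mulr_ge0 // ltW.
  have main : D * (x t ^+ 2 + d t ^+ 2) <= (D + L) * (x 0 ^+ 2 + d 0 ^+ 2).
    exact: le_trans m1 (le_trans h h0).
  rewrite -(ler_pM2l HD).
  have -> : D * ((D + L) / D * (x 0 ^+ 2 + d 0 ^+ 2)) = (D + L) * (x 0 ^+ 2 + d 0 ^+ 2).
    by field; rewrite gt_eqF.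
  exact: main.
move=> eps e0.
have V00 : 0 <= V 0 by apply: le_trans (Vge 0); rewrite mulr_ge0 // ltW.
exists (V 0 / (D * k * eps)) => t Mt.
have Dke : 0 < D * k * eps by rewrite !mulr_gt0.
have M0 : 0 <= V 0 / (D * k * eps) by rewrite divr_ge0 // ltW.
have t0 : 0 <= t by lra.
split => //.
have h := key t t0.
have h2 : V 0 < D * k * eps * t by rewrite mulrC -ltr_pdivrMr.
have P : 0 < D * (1 + k * t).
  by rewrite mulr_gt0 //; have := mulr_ge0 (ltW k0) t0; lra.
rewrite -(ltr_pM2l P).
have E1 : D * (1 + k * t) * eps = D * eps + D * k * eps * t by ring.
have E2 : D * (1 + k * t) * (x t ^+ 2 + d t ^+ 2) = D * (x t ^+ 2 + d t ^+ 2) * (1 + k * t) by ring.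
have De : 0 < D * eps by rewrite mulr_gt0.
rewrite E1 E2; lra.
Qed.

End Core.


Section Red.
Variable R : realType.

Definition xs (p : params R) (s : signals R) : R -> R := Wt s - cst (Wt_s p).
Definition ds (conn : connection) (s : signals R) : R -> R :=
  if ac_connected conn then theta s - theta_ac s else cst 0.

Lemma der_xs (f : R -> R) (w t : R) : derivable f t 1 ->
  derivable (f - cst w) t 1 /\ derive1 (f - cst w) t = derive1 f t.
Proof.
move=> H; split; first by apply: derivableB => //; exact: derivable_cst.
by rewrite !derive1E deriveB ?derive_cst ?subr0 //; exact: derivable_cst.
Qed.

Lemma der_ds (f g : R -> R) (t : R) : derivable f t 1 -> derivable g t 1 ->
  derivable (f - g) t 1 /\ derive1 (f - g) t = derive1 f t - derive1 g t.
Proof.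
move=> Hf Hg; split; first exact: derivableB.
by rewrite !derive1E deriveB.
Qed.

Lemma der_0 (t : R) : derivable (cst (0:R)) t 1 /\ derive1 (cst (0:R)) t = 0.
Proof. by split; [exact: derivable_cst | rewrite derive1E derive_cst]. Qed.

Definition goal6 (s : signals R) (conn : connection) (p : params R) (a b c e p1 p2 q1 q2 : R) t :=
  [/\ derivable (xs p s) t 1, derive1 (xs p s) t = a * xs p s t + b * ds conn s t,
      derivable (ds conn s) t 1, derive1 (ds conn s) t = c * xs p s t + e * ds conn s t &
      omega s t = omega_s p + p1 * xs p s t + p2 * ds conn s t /\
      Vt s t = Vt_s p + q1 * xs p s t + q2 * ds conn s t].


Lemma pdc_solve (P Q X Vdc Vt g kd kpd kwd Vs : R) : 0 < g -> 0 <= kd -> 0 < kpd ->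
  P = g * (Vdc - Vt) -> Vdc = Vs - kd * P -> Vt = Vs + kpd * (P - Q) + kwd * X ->
  P = (g * kpd * Q - g * kwd * X) / (1 + g * kd + g * kpd).
Proof.
move=> g0 kd0 kp0 HP HVdc HVt.
have den0 : 0 < 1 + g * kd + g * kpd.
  have := mulr_ge0 (ltW g0) kd0; have := mulr_gt0 g0 kp0; lra.
have nz : 1 + g * kd + g * kpd != 0 by rewrite gt_eqF.
rewrite -[P](mulfK nz); congr (_ / _).
rewrite HVdc HVt in HP.
lra.
Qed.
Arguments pdc_solve {P Q X Vdc Vt g kd kpd kwd Vs}.

Lemma case_HA (p : params R) s t :
  closed_loop HybridDroop ACOnly p s -> 0 <= t ->
  goal6 s ACOnly p 0 (- b_ac p) (kw_ac p) (- (b_ac p * (kp_ac p + k_ac p)))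
     (kw_ac p) (- (kp_ac p * b_ac p)) (kw_dc p) 0 t.
Proof.
move=> H t0; have [[dW eW] [dth eth] [Hom HV] Hac Hdc] := H t t0.
case: Hac => [Hpac dthac ethac]; rewrite /= in Hdc.
have [dx ex] := der_xs (Wt s) (Wt_s p) t dW.
have [dd ed] := der_ds (theta s) (theta_ac s) t dth dthac.
rewrite /goal6 /xs /ds /= ex ed; split => //; try split.
all: rewrite ?fctE ?eW ?eth ?ethac ?Hom ?HV ?Hdc ?Hpac /=; ring.
Qed.

Lemma case_PA (p : params R) s t :
  closed_loop EnergyPD ACOnly p s -> 0 <= t ->
  goal6 s ACOnly p 0 (- b_ac p) (kw_ac p) (- (b_ac p * (kp_ac p + k_ac p)))
     (kw_ac p) (- (kp_ac p * b_ac p)) (kw_dc p) (- (kp_dc p * b_ac p)) t.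
Proof.
move=> H t0; have [[dW eW] [dth eth] [Hom HV] Hac Hdc] := H t t0.
case: Hac => [Hpac dthac ethac]; rewrite /= in Hdc.
rewrite eW in Hom HV.
have [dx ex] := der_xs (Wt s) (Wt_s p) t dW.
have [dd ed] := der_ds (theta s) (theta_ac s) t dth dthac.
rewrite /goal6 /xs /ds /= ex ed; split => //; try split.
all: rewrite ?fctE ?eW ?eth ?ethac ?Hom ?HV ?Hdc ?Hpac /=; ring.
Qed.

Definition den (p : params R) := 1 + g_dc p * k_dc p + g_dc p * kp_dc p.
Definition alp (p : params R) := g_dc p * kw_dc p / den p.
Definition bet (p : params R) := b_ac p * (1 + g_dc p * k_dc p) / den p.

Lemma den_gt0 (p : params R) : 0 < g_dc p -> 0 <= k_dc p -> 0 < kp_dc p -> 0 < den p.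
Proof.
move=> g0 kd0 kp0; rewrite /den.
have := mulr_ge0 (ltW g0) kd0; have := mulr_gt0 g0 kp0; lra.
Qed.
Arguments den_gt0 {p}.

Lemma case_HD (p : params R) s t :
  0 < g_dc p -> 0 <= k_dc p -> 0 < kp_dc p ->
  closed_loop HybridDroop DCOnly p s -> 0 <= t ->
  goal6 s DCOnly p (- alp p) 0 0 (-1)
     (kw_ac p) 0 (kw_dc p - kp_dc p * alp p) 0 t.
Proof.
move=> g0 kd0 kp0 H t0; have [[dW eW] [dth eth] [Hom HV] Hac [HP HVdc]] := H t t0.
rewrite /= in Hac.
have EP := pdc_solve g0 kd0 kp0 HP HVdc HV.
have [dx ex] := der_xs (Wt s) (Wt_s p) t dW.
have [dd ed] := der_0 t.
rewrite /goal6 /xs /ds /= ex ed; split => //; try split.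
all: rewrite ?fctE ?eW ?Hom ?HV ?Hac /=.
all: rewrite ?EP ?Hac /alp /den /=; ring.
Qed.

Lemma case_PD (p : params R) s t :
  0 < g_dc p -> 0 <= k_dc p -> 0 < kp_dc p ->
  closed_loop EnergyPD DCOnly p s -> 0 <= t ->
  goal6 s DCOnly p (- alp p) 0 0 (-1)
     (kw_ac p - kp_ac p * alp p) 0 (kw_dc p - kp_dc p * alp p) 0 t.
Proof.
move=> g0 kd0 kp0 H t0; have [[dW eW] [dth eth] [Hom HV] Hac [HP HVdc]] := H t t0.
rewrite /= in Hac.
rewrite eW in Hom HV.
have EP := pdc_solve g0 kd0 kp0 HP HVdc HV.
have [dx ex] := der_xs (Wt s) (Wt_s p) t dW.
have [dd ed] := der_0 t.
rewrite /goal6 /xs /ds /= ex ed; split => //; try split.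
all: rewrite ?fctE ?eW ?Hom ?HV ?Hac /=.
all: rewrite ?EP ?Hac /alp /den /=; ring.
Qed.

Lemma case_HAD (p : params R) s t :
  0 < g_dc p -> 0 <= k_dc p -> 0 < kp_dc p ->
  closed_loop HybridDroop ACDC p s -> 0 <= t ->
  goal6 s ACDC p (- alp p) (- b_ac p) (kw_ac p) (- (b_ac p * (kp_ac p + k_ac p)))
     (kw_ac p) (- (kp_ac p * b_ac p)) (kw_dc p - kp_dc p * alp p) 0 t.
Proof.
move=> g0 kd0 kp0 H t0; have [[dW eW] [dth eth] [Hom HV] Hac [HP HVdc]] := H t t0.
case: Hac => [Hpac dthac ethac].
have EP := pdc_solve g0 kd0 kp0 HP HVdc HV.
have [dx ex] := der_xs (Wt s) (Wt_s p) t dW.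
have [dd ed] := der_ds (theta s) (theta_ac s) t dth dthac.
rewrite /goal6 /xs /ds /= ex ed; split => //; try split.
all: rewrite ?fctE ?eW ?eth ?ethac ?Hom ?HV /=.
all: rewrite ?EP ?Hpac /alp /den /=; ring.
Qed.

Lemma case_PAD (p : params R) s t :
  0 < g_dc p -> 0 <= k_dc p -> 0 < kp_dc p ->
  closed_loop EnergyPD ACDC p s -> 0 <= t ->
  goal6 s ACDC p (- alp p) (- bet p) (kw_ac p - kp_ac p * alp p)
     (- (kp_ac p * bet p) - k_ac p * b_ac p)
     (kw_ac p - kp_ac p * alp p) (- (kp_ac p * bet p))
     (kw_dc p - kp_dc p * alp p) (- (kp_dc p * bet p)) t.
Proof.
move=> g0 kd0 kp0 H t0; have [[dW eW] [dth eth] [Hom HV] Hac [HP HVdc]] := H t t0.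
case: Hac => [Hpac dthac ethac].
rewrite eW in Hom HV.
have EP := pdc_solve g0 kd0 kp0 HP HVdc HV.
have dn := den_gt0 g0 kd0 kp0; rewrite /den in dn.
have [dx ex] := der_xs (Wt s) (Wt_s p) t dW.
have [dd ed] := der_ds (theta s) (theta_ac s) t dth dthac.
rewrite /goal6 /xs /ds /= ex ed; split => //; try split.
all: rewrite ?fctE ?eW ?eth ?ethac ?Hom ?HV /=.
all: rewrite ?EP ?Hpac /alp /bet /den /=; field.
all: try by rewrite gt_eqF.
Qed.

End Red.
Arguments goal6 {R}.
Arguments xs {R}.
Arguments ds {R}.
Arguments den {R}.
Arguments alp {R}.
Arguments bet {R}.
Arguments den_gt0 {R p}.


Lemma cvg_from (R : realType) (f : R -> R) (l : R) :
  (forall eps, 0 < eps -> exists M, forall t, M < t -> `|f t - l| < eps) ->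
  f t @[t --> +oo] --> l.
Proof.
move=> H; apply/cvgrPdist_lt => eps e0.
have [M HM] := H eps e0.
exists M; split; first exact: num_real.
by move=> t Mt; rewrite distrC; apply: HM.
Qed.

Section Main.
Variable R : realType.

Lemma reduce (ctrl : control) (conn : connection) (p : params R) :
  0 < kp_ac p -> 0 < kp_dc p -> 0 < kw_ac p -> 0 < kw_dc p ->
  0 < b_ac p -> 0 < g_dc p -> 0 <= k_ac p -> 0 <= k_dc p ->
  exists a b c e p1 p2 q1 q2 : R, [/\ a + e < 0, 0 < a * e - b * c &
    forall s, closed_loop ctrl conn p s -> forall t, 0 <= t ->
      goal6 s conn p a b c e p1 p2 q1 q2 t].
Proof.
move=> kpa kpd kwa kwd ba gd ka kd.
have dn := den_gt0 gd kd kpd.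
have al : 0 < alp p by rewrite /alp divr_gt0 // mulr_gt0.
have be : 0 < bet p.
  rewrite /bet divr_gt0 // mulr_gt0 //; have := mulr_ge0 (ltW gd) kd; lra.
have h1 : 0 < b_ac p * (kp_ac p + k_ac p) by rewrite mulr_gt0 //; lra.
have h2 : 0 < b_ac p * kw_ac p by rewrite mulr_gt0.
case: ctrl; case: conn.
- exists 0, (- b_ac p), (kw_ac p), (- (b_ac p * (kp_ac p + k_ac p))),
    (kw_ac p), (- (kp_ac p * b_ac p)), (kw_dc p), 0.
  split; [lra | lra | move=> s H t t0; exact: case_HA].
- exists (- alp p), 0, 0, (-1), (kw_ac p), 0, (kw_dc p - kp_dc p * alp p), 0.
  split; [lra | lra | move=> s H t t0; exact: case_HD].
- exists (- alp p), (- b_ac p), (kw_ac p), (- (b_ac p * (kp_ac p + k_ac p))),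
    (kw_ac p), (- (kp_ac p * b_ac p)), (kw_dc p - kp_dc p * alp p), 0.
  have h3 : 0 < alp p * (b_ac p * (kp_ac p + k_ac p)) by rewrite mulr_gt0.
  split; [lra | lra | move=> s H t t0; exact: case_HAD].
- exists 0, (- b_ac p), (kw_ac p), (- (b_ac p * (kp_ac p + k_ac p))),
    (kw_ac p), (- (kp_ac p * b_ac p)), (kw_dc p), (- (kp_dc p * b_ac p)).
  split; [lra | lra | move=> s H t t0; exact: case_PA].
- exists (- alp p), 0, 0, (-1), (kw_ac p - kp_ac p * alp p), 0,
    (kw_dc p - kp_dc p * alp p), 0.
  split; [lra | lra | move=> s H t t0; exact: case_PD].
- exists (- alp p), (- bet p), (kw_ac p - kp_ac p * alp p),
    (- (kp_ac p * bet p) - k_ac p * b_ac p),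
    (kw_ac p - kp_ac p * alp p), (- (kp_ac p * bet p)),
    (kw_dc p - kp_dc p * alp p), (- (kp_dc p * bet p)).
  have h4 : 0 < kp_ac p * bet p by rewrite mulr_gt0.
  have h5 : 0 <= k_ac p * b_ac p by rewrite mulr_ge0 // ltW.
  have h6 : 0 <= alp p * (k_ac p * b_ac p) by rewrite mulr_ge0 // ltW.
  have h7 : 0 < bet p * kw_ac p by rewrite mulr_gt0.
  split; [lra | | move=> s H t t0; exact: case_PAD].
  have -> : - alp p * (- (kp_ac p * bet p) - k_ac p * b_ac p) -
     - bet p * (kw_ac p - kp_ac p * alp p) =
     alp p * (k_ac p * b_ac p) + bet p * kw_ac p by ring.
  lra.
Qed.


Lemma sq_lt (u eps : R) : 0 < eps -> u ^+ 2 < eps ^+ 2 -> `|u| < eps.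
Proof.
move=> e0 h; rewrite -(real_normK (num_real u)) in h.
have n0 := normr_ge0 u.
case: (ltP `|u| eps) => // h2.
have : eps ^+ 2 <= `|u| ^+ 2 by rewrite !expr2; nra.
lra.
Qed.

Lemma small_of_sq (x d eta : R) : 0 < eta -> x ^+ 2 + d ^+ 2 < eta ^+ 2 ->
  `|x| < eta /\ `|d| < eta.
Proof.
move=> e0 h; have hx := sqr_ge0 x; have hd := sqr_ge0 d.
by split; apply: sq_lt => //; lra.
Qed.

Lemma lin_small (x d p1 p2 eps : R) : 0 < eps ->
  `|x| < eps / (`|p1| + `|p2| + 1) -> `|d| < eps / (`|p1| + `|p2| + 1) ->
  `|p1 * x + p2 * d| < eps.
Proof.
move=> e0 hx hd.
have N0 : 0 < `|p1| + `|p2| + 1 by have := normr_ge0 p1; have := normr_ge0 p2; lra.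
set eta := eps / _ in hx hd.
have E : eps = (`|p1| + `|p2| + 1) * eta by rewrite /eta mulrC mulfVK ?gt_eqF.
apply: le_lt_trans (ler_normD _ _) _; rewrite !normrM.
have h1 : `|p1| * `|x| <= `|p1| * eta by rewrite ler_wpM2l // ltW.
have h2 : `|p2| * `|d| <= `|p2| * eta by rewrite ler_wpM2l // ltW.
have et : 0 < eta by apply: le_lt_trans hx.
rewrite E; lra.
Qed.

Lemma sn_eq (conn : connection) (p : params R) s t :
  state_norm conn p s t = Num.max `|xs p s t| `|ds conn s t|.
Proof.
rewrite /state_norm /xs /ds; case: conn => /=; rewrite ?fctE //.
by rewrite normr0; apply/esym/max_idPl.
Qed.

End Main.
Arguments small_of_sq {R x d eta}.
Arguments lin_small {R x d p1 p2 eps}.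
Arguments sq_lt {R u eps}.
Arguments sn_eq {R}.

Theorem theorem1 (R : realType) (ctrl : control) (conn : connection)
    (p : params R) :
  0 < kp_ac p -> 0 < kp_dc p -> 0 < kw_ac p -> 0 < kw_dc p ->
  0 < b_ac p -> 0 < g_dc p -> 0 <= k_ac p -> 0 <= k_dc p ->
  (ctrl = HybridDroop -> kp_ac p < kw_ac p) ->
  asymptotically_stable (closed_loop ctrl conn p) (state_norm conn p) /\
  (forall s : signals R, closed_loop ctrl conn p s ->
     [/\ Wt s t @[t --> +oo] --> Wt_s p,
         omega s t @[t --> +oo] --> omega_s p
       & Vt s t @[t --> +oo] --> Vt_s p]).
Proof.
move=> h1 h2 h3 h4 h5 h6 h7 h8 _.
have [a [b [c [e [p1 [p2 [q1 [q2 [HT HD Hs]]]]]]]]] := @reduce R ctrl conn p h1 h2 h3 h4 h5 h6 h7 h8.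
have [K [K0 HK]] := @core R _ _ _ _ HT HD.
have HK' s : closed_loop ctrl conn p s -> _ := fun H => HK (xs p s) (ds conn s)
  (fun t t0 => let: And5 u v _ _ _ := Hs s H t t0 in conj u v)
  (fun t t0 => let: And5 _ _ u v _ := Hs s H t t0 in conj u v).
have conv s (f : R -> R) (l q1' q2' : R) : closed_loop ctrl conn p s ->
    (forall t, 0 <= t -> f t = l + q1' * xs p s t + q2' * ds conn s t) ->
    f t @[t --> +oo] --> l.
  move=> H Hf; have [_ Hc] := HK' s H.
  apply: cvg_from => eps e0.
  set eta := eps / (`|q1'| + `|q2'| + 1).
  have et : 0 < eta.
    by rewrite divr_gt0 //; have := normr_ge0 q1'; have := normr_ge0 q2'; lra.
  have [M HM] := Hc (eta ^+ 2) (exprn_gt0 2 et).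
  exists M => t Mt; have [t0 St] := HM t Mt.
  have [sx sd] := small_of_sq et St.
  have -> : f t - l = q1' * xs p s t + q2' * ds conn s t by rewrite Hf //; ring.
  exact: lin_small.
split; last first.
  move=> s H; split.
  - apply: (conv s (Wt s) (Wt_s p) 1 0 H) => t t0; rewrite /xs; change ((Wt s - cst (Wt_s p)) t) with (Wt s t - Wt_s p); ring.
  - by apply: (conv s (omega s) (omega_s p) p1 p2 H) => t t0; have [_ _ _ _ []] := Hs s H t t0.
  - by apply: (conv s (Vt s) (Vt_s p) q1 q2 H) => t t0; have [_ _ _ _ []] := Hs s H t t0.
split.
  move=> eps e0.
  exists (eps / (2 * K + 1)); first by rewrite divr_gt0 //; lra.
  move=> s H n0 t t0.
  have [Hb _] := HK' s H.
  rewrite sn_eq in n0; rewrite sn_eq.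
  move: n0; rewrite gt_max => /andP [x0 d0].
  set del := eps / (2 * K + 1) in x0 d0.
  have dl : 0 < del by rewrite divr_gt0 //; lra.
  have ex0 : xs p s 0 ^+ 2 <= del ^+ 2.
    rewrite -(real_normK (num_real (xs p s 0))) !expr2.
    have := normr_ge0 (xs p s 0); nra.
  have ed0 : ds conn s 0 ^+ 2 <= del ^+ 2.
    rewrite -(real_normK (num_real (ds conn s 0))) !expr2.
    have := normr_ge0 (ds conn s 0); nra.
  have B := Hb t t0.
  have B2 : xs p s t ^+ 2 + ds conn s t ^+ 2 <= K * (2 * del ^+ 2).
    apply: le_trans B _; apply: ler_wpM2l; [exact: ltW | lra].
  have Edel : eps = (2 * K + 1) * del by rewrite /del mulrC mulfVK ?gt_eqF //; lra.
  have B3 : K * (2 * del ^+ 2) < eps ^+ 2.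
    rewrite Edel !expr2.
    have : 0 < del * del by rewrite mulr_gt0.
    nra.
  have [sx sd] := small_of_sq e0 (le_lt_trans B2 B3).
  by rewrite gt_max sx sd.
move=> s H; have [_ Hc] := HK' s H.
apply: cvg_from => eps e0.
have [M HM] := Hc (eps ^+ 2) (exprn_gt0 2 e0).
exists M => t Mt; have [t0 St] := HM t Mt.
have [sx sd] := small_of_sq e0 St.
rewrite subr0 sn_eq ger0_norm; first by rewrite gt_max sx sd.
by rewrite le_max normr_ge0.
Qed.
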